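(* Let $P$ be an irreducible transition matrix on the finite set $S$, reversible with respect to $\pi$, and suppose $\mathrm{trace}(P)$ (equivalently, the sum of the eigenvalues of $P$) equals $\max\big(0,(2\pi_{\max}-1)/\pi_{\max}\big)$, where $\pi_{\max}=\max_x\pi(x)$. Then no other transition matrix that is reversible with respect to $\pi$ efficiency-dominates $P$.
   Context: $S$ is a finite set, and $\pi$ is a probability distribution on $S$ with $\pi(x)>0$ for all $x$. A transition matrix $P$ is reversible with respect to $\pi$ if $\pi(x)P(x,y)=\pi(y)P(y,x)$ for all $x,y$; irreducible if every state can be reached from every other with positive probability in some number of steps. For a Markov chain $X_1,X_2,\dots$ with transition matrix $P$ and $X_1\sim\pi$, $v(f,P)=\lim_{N\to\infty}\frac1N\mathrm{Var}\big(\sum_{i=1}^N f(X_i)\big)$. $P$ efficiency-dominates $Q$ if $v(f,P)\le v(f,Q)$ for all $f:S\to\mathbb R$. *)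

(* Defs.v *)
From HB Require Import structures.
From mathcomp Require Import all_boot all_order all_algebra.
From mathcomp Require Import all_classical all_reals ereal topology normedtype sequences.
Set Implicit Arguments. Unset Strict Implicit. Unset Printing Implicit Defensive.
Import Order.TTheory GRing.Theory Num.Theory.
Local Open Scope ring_scope.
Local Open Scope ereal_scope.
Local Open Scope ring_scope.

Section MC.
Variables (R : realType) (S : finType).

Definition pos_prob (pi : S -> R) : Prop :=
  (forall x, 0 < pi x) /\ \sum_x pi x = 1.

Definition transition_matrix (P : S -> S -> R) : Prop :=
  (forall x y, 0 <= P x y) /\ (forall x, \sum_y P x y = 1).

Definition reversible (pi : S -> R) (P : S -> S -> R) : Prop :=
  forall x y, pi x * P x y = pi y * P y x.

Fixpoint mpow (P : S -> S -> R) (n : nat) : S -> S -> R :=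
  match n with
  | 0 => fun x y => if x == y then 1 else 0
  | n'.+1 => fun x y => \sum_z mpow P n' x z * P z y
  end.

Definition irreducible (P : S -> S -> R) : Prop :=
  forall x y, exists n, 0 < mpow P n x y.

Definition trace (P : S -> S -> R) : R := \sum_x P x x.

Definition pi_max (pi : S -> R) : R := \big[Num.max/0]_x pi x.

Fixpoint chain_prob (P : S -> S -> R) (x : S) (s : seq S) : R :=
  match s with
  | [::] => 1
  | y :: s' => P x y * chain_prob P y s'
  end.

Definition path_prob (pi : S -> R) (P : S -> S -> R) (s : seq S) : R :=
  match s with
  | [::] => 1
  | x :: s' => pi x * chain_prob P x s'
  end.

Definition expect (pi : S -> R) (P : S -> S -> R) (N : nat)
    (g : N.-tuple S -> R) : R :=
  \sum_(w : N.-tuple S) path_prob pi P w * g w.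

Definition var_sum (pi : S -> R) (P : S -> S -> R) (f : S -> R) (N : nat) : R :=
  expect pi P (fun w : N.-tuple S => (\sum_(x <- w) f x) ^+ 2)
  - (expect pi P (fun w : N.-tuple S => \sum_(x <- w) f x)) ^+ 2.

Definition asym_var (pi : S -> R) (P : S -> S -> R) (f : S -> R) : \bar R :=
  limn (fun N : nat => ((var_sum pi P f N) / N%:R)%:E).

Definition eff_dominates (pi : S -> R) (P Q : S -> S -> R) : Prop :=
  forall f : S -> R, (asym_var pi P f <= asym_var pi Q f)%E.

End MC.

(* Main.v *)
Require Import Defs.
From HB Require Import structures.
From mathcomp Require Import all_boot all_order all_algebra.
From mathcomp Require Import all_classical all_reals ereal topology normedtype sequences.
From mathcomp Require Import ring lra.
Set Implicit Arguments. Unset Strict Implicit. Unset Printing Implicit Defensive.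
Import Order.TTheory GRing.Theory Num.Theory.
Import numFieldNormedType.Exports.
Local Open Scope ring_scope.


Section A.
Variables (R : realType) (S : finType).
Implicit Types (pi : S -> R) (T : S -> S -> R) (u v g h : S -> R).

Lemma sum_tuple_cons N (F : N.+1.-tuple S -> R) :
  \sum_(w : N.+1.-tuple S) F w = \sum_(x : S) \sum_(t : N.-tuple S) F [tuple of x :: t].
Proof.
rewrite pair_big /=.
rewrite (reindex (fun p : S * N.-tuple S => [tuple of p.1 :: p.2])) //=.
exists (fun w : N.+1.-tuple S => (thead w, [tuple of behead w])) => [[x t] _|w _] /=.
  by congr (_, _); apply: val_inj.
by rewrite -tuple_eta.
Qed.

Lemma sum_tuple0 (F : 0.-tuple S -> R) : \sum_(w : 0.-tuple S) F w = F [tuple].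
Proof.
rewrite (eq_bigr (fun _ => F [tuple])); last by move=> w _; rewrite tuple0.
by rewrite sumr_const card_tuple expn0 mulr1n.
Qed.

Definition ssum g (s : seq S) := \sum_(y <- s) g y.
Definition app T u := fun x => \sum_y T x y * u y.
Definition ip pi u v := \sum_x pi x * (u x * v x).
Fixpoint tp T n u := match n with 0 => u | n'.+1 => app T (tp T n' u) end.

Definition M0 T N x := \sum_(t : N.-tuple S) chain_prob T x t.
Definition M1 T g N x := \sum_(t : N.-tuple S) chain_prob T x t * ssum g t.
Definition M2 T g N x := \sum_(t : N.-tuple S) chain_prob T x t * (ssum g t) ^+ 2.

Lemma chain_sum T N x (F : seq S -> R) :
  \sum_(t : N.+1.-tuple S) chain_prob T x t * F t =
  \sum_y T x y * \sum_(t : N.-tuple S) chain_prob T y t * F (y :: t).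
Proof.
rewrite sum_tuple_cons; apply: eq_bigr => y _; rewrite mulr_sumr.
by apply: eq_bigr => t _ /=; rewrite mulrA.
Qed.

Lemma path_sum pi T N (F : seq S -> R) :
  \sum_(t : N.+1.-tuple S) path_prob pi T t * F t =
  \sum_y pi y * \sum_(t : N.-tuple S) chain_prob T y t * F (y :: t).
Proof.
rewrite sum_tuple_cons; apply: eq_bigr => y _; rewrite mulr_sumr.
by apply: eq_bigr => t _ /=; rewrite mulrA.
Qed.

Lemma M0S T N x : M0 T N.+1 x = app T (M0 T N) x.
Proof.
rewrite /M0; transitivity (\sum_(t : N.+1.-tuple S) chain_prob T x t * 1).
  by apply: eq_bigr => t _; rewrite mulr1.
rewrite (chain_sum T N x (fun _ => 1)); apply: eq_bigr => y _.
by under eq_bigr do rewrite mulr1.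
Qed.

Lemma M0_1 T (hT : transition_matrix T) N x : M0 T N x = 1.
Proof.
elim: N x => [|N IH] x.
  by rewrite /M0 sum_tuple0.
rewrite M0S /app; under eq_bigr do rewrite IH mulr1.
by case: hT => _ ->.
Qed.

Lemma M1S T (hT : transition_matrix T) g N x :
  M1 T g N.+1 x = app T (fun y => g y + M1 T g N y) x.
Proof.
rewrite /M1 chain_sum; apply: eq_bigr => y _; congr (_ * _).
rewrite /ssum; under eq_bigr do rewrite big_cons mulrDr.
rewrite big_split /=; congr (_ + _).
by rewrite -[RHS]mulr1 -(M0_1 hT N y) /M0 mulr_sumr; apply: eq_bigr => t _; rewrite mulrC.
Qed.

Lemma M2S T (hT : transition_matrix T) g N x :
  M2 T g N.+1 x = app T (fun y => g y ^+ 2 + 2 * g y * M1 T g N y + M2 T g N y) x.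
Proof.
rewrite /M2 (chain_sum T N x (fun t => ssum g t ^+ 2)); apply: eq_bigr => y _; congr (_ * _).
rewrite /ssum; under eq_bigr do rewrite big_cons sqrrD !mulrDr.
rewrite !big_split /=; congr (_ + _ + _).
- by rewrite -mulr_suml; have := M0_1 hT N y; rewrite /M0 => ->; rewrite mul1r.
- by rewrite /M1 /ssum mulr_sumr -big_split /=; apply: eq_bigr => t _; ring.
Qed.

Lemma app_ext T u v : (forall x, u x = v x) -> forall x, app T u x = app T v x.
Proof. by move=> huv x; apply: eq_bigr => y _; rewrite huv. Qed.

Lemma appB T u v x : app T (fun y => u y - v y) x = app T u x - app T v x.
Proof. by rewrite /app -sumrB; apply: eq_bigr => y _; rewrite mulrBr. Qed.

Lemma ip_sym pi u v : ip pi u v = ip pi v u.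
Proof. by rewrite /ip; apply: eq_bigr => x _; rewrite (mulrC (u x)). Qed.

Lemma ip_app pi T (hrev : reversible pi T) u v : ip pi (app T u) v = ip pi u (app T v).
Proof.
rewrite /ip /app.
transitivity (\sum_x \sum_y pi x * T x y * u y * v x).
  by apply: eq_bigr => x _; rewrite mulr_suml mulr_sumr; apply: eq_bigr => y _; ring.
rewrite exchange_big /=; apply: eq_bigr => x _; rewrite mulr_sumr mulr_sumr.
apply: eq_bigr => y _; rewrite hrev; ring.
Qed.

Lemma stat pi T (hrev : reversible pi T) (hT : transition_matrix T) u :
  \sum_x pi x * app T u x = \sum_x pi x * u x.
Proof.
have h1 : forall w, \sum_x pi x * w x = ip pi w (fun _ => 1).
  by move=> w; apply: eq_bigr => x _; rewrite mulr1.
rewrite !h1 ip_app //; apply: eq_bigr => x _; congr (_ * (_ * _)).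
by rewrite /app; under eq_bigr do rewrite mulr1; case: hT => _ ->.
Qed.

Lemma expect1 pi T (hT : transition_matrix T) g N :
  expect pi T (fun w : N.+1.-tuple S => \sum_(x <- w) g x) =
  \sum_x pi x * (g x + M1 T g N x).
Proof.
rewrite /expect (path_sum pi T N (ssum g)); apply: eq_bigr => x _; congr (_ * _).
rewrite /ssum; under eq_bigr do rewrite big_cons mulrDr.
rewrite big_split /=; congr (_ + _).
by rewrite -mulr_suml; have := M0_1 hT N x; rewrite /M0 => ->; rewrite mul1r.
Qed.

Lemma expect2 pi T (hT : transition_matrix T) g N :
  expect pi T (fun w : N.+1.-tuple S => (\sum_(x <- w) g x) ^+ 2) =
  \sum_x pi x * (g x ^+ 2 + 2 * g x * M1 T g N x + M2 T g N x).
Proof.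
rewrite /expect (path_sum pi T N (fun t => ssum g t ^+ 2)); apply: eq_bigr => y _; congr (_ * _).
rewrite /ssum; under eq_bigr do rewrite big_cons sqrrD !mulrDr.
rewrite !big_split /=; congr (_ + _ + _).
- by rewrite -mulr_suml; have := M0_1 hT N y; rewrite /M0 => ->; rewrite mul1r.
- by rewrite /M1 /ssum mulr_sumr -big_split /=; apply: eq_bigr => t _; ring.
Qed.

Lemma M1_0 T g x : M1 T g 0 x = 0.
Proof. by rewrite /M1 sum_tuple0 /ssum big_nil mulr0. Qed.

Lemma M2_0 T g x : M2 T g 0 x = 0.
Proof. by rewrite /M2 sum_tuple0 /ssum big_nil expr0n mulr0. Qed.

Lemma M1_centered pi T (hrev : reversible pi T) (hT : transition_matrix T) g
  (hg : \sum_x pi x * g x = 0) N : \sum_x pi x * M1 T g N x = 0.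
Proof.
elim: N => [|N IH].
  by apply: big1 => x _; rewrite M1_0 mulr0.
under eq_bigr do rewrite M1S //.
rewrite stat //; under eq_bigr do rewrite mulrDr.
by rewrite big_split /= hg IH addr0.
Qed.

Lemma var_M2 pi T (hrev : reversible pi T) (hT : transition_matrix T) g
  (hg : \sum_x pi x * g x = 0) N : var_sum pi T g N = \sum_x pi x * M2 T g N x.
Proof.
case: N => [|N].
  rewrite /var_sum /expect !sum_tuple0 /= big_nil expr0n /= mulr0 expr0n subr0.
  by symmetry; apply: big1 => x _; rewrite M2_0 mulr0.
rewrite /var_sum expect1 // expect2 //.
under [X in _ - X ^+ 2]eq_bigr do rewrite mulrDr.
rewrite big_split /= hg M1_centered // addr0 expr0n /= subr0.
by under [RHS]eq_bigr do rewrite M2S //; rewrite stat.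
Qed.

Lemma var_rec pi T (hrev : reversible pi T) (hT : transition_matrix T) g
  (hg : \sum_x pi x * g x = 0) N :
  var_sum pi T g N.+1 = var_sum pi T g N + ip pi g g + 2 * ip pi g (M1 T g N).
Proof.
rewrite !var_M2 //.
under eq_bigr do rewrite M2S //.
rewrite stat // /ip mulr_sumr -!big_split /=; apply: eq_bigr => x _; ring.
Qed.

Section B.
Variables (pi : S -> R) (T : S -> S -> R) (hrev : reversible pi T) (hT : transition_matrix T).
Variables (g h : S -> R) (hgh : forall x, g x = h x - app T h x).

Lemma g_centered : \sum_x pi x * g x = 0.
Proof.
under eq_bigr do rewrite hgh mulrBr.
by rewrite sumrB stat // subrr.
Qed.

Lemma M1_h N x : M1 T g N x = app T h x - tp T N.+1 h x.
Proof.
elim: N x => [|N IH] x.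
  by rewrite M1_0 /= subrr.
rewrite M1S // -appB; apply: app_ext => y.
by rewrite IH hgh; rewrite /=; ring.
Qed.

Lemma var_closed N : var_sum pi T g N =
  N%:R * (ip pi h h - ip pi (app T h) (app T h))
  - 2 * (ip pi h (app T h) - ip pi h (tp T N.+1 h)).
Proof.
elim: N => [|N IH].
  rewrite /var_sum /expect !sum_tuple0 /= big_nil expr0n /= mulr0 expr0n subr0.
  by rewrite mul0r /= subrr mulr0 subr0.
rewrite var_rec //; last exact: g_centered.
rewrite IH.
have e1 : ip pi g (M1 T g N) = ip pi g (app T h) - ip pi g (tp T N.+1 h).
  by rewrite /ip -sumrB; apply: eq_bigr => x _; rewrite M1_h; ring.
have e2 : ip pi g (tp T N.+1 h) = ip pi h (tp T N.+1 h) - ip pi h (tp T N.+2 h).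
  have -> : ip pi h (tp T N.+2 h) = ip pi (app T h) (tp T N.+1 h) by rewrite ip_app.
  by rewrite /ip -sumrB; apply: eq_bigr => x _; rewrite hgh; ring.
have e3 : ip pi g g + 2 * ip pi g (app T h) = ip pi h h - ip pi (app T h) (app T h).
  by rewrite /ip mulr_sumr -big_split -sumrB /=; apply: eq_bigr => x _; rewrite hgh; ring.
rewrite e1 e2 -natr1.
transitivity (N%:R * (ip pi h h - ip pi (app T h) (app T h)) -
  2 * (ip pi h (app T h) - ip pi h (tp T N.+1 h)) + (ip pi g g + 2 * ip pi g (app T h))
  - 2 * (ip pi h (tp T N.+1 h) - ip pi h (tp T N.+2 h))); first ring.
rewrite e3; ring.
Qed.

Definition Kb := \sum_y `|h y|.

Lemma tp_bound n x : `|tp T n h x| <= Kb.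
Proof.
elim: n x => [|n IH] x /=.
  rewrite /Kb (bigD1 x) //= lerDl; apply: sumr_ge0 => y _; exact: normr_ge0.
rewrite /app; apply: (le_trans (ler_norm_sum _ _ _)).
apply: (@le_trans _ _ (\sum_y T x y * Kb)).
  apply: ler_sum => y _; rewrite normrM; case: hT => h0 _.
  by rewrite ger0_norm // ler_wpM2l.
by rewrite -mulr_suml; case: hT => _ ->; rewrite mul1r.
Qed.

Definition Bb := \sum_x pi x * (`|h x| * Kb).

Lemma ip_bound (hpi : forall x, 0 <= pi x) n : `|ip pi h (tp T n h)| <= Bb.
Proof.
rewrite /ip; apply: (le_trans (ler_norm_sum _ _ _)); apply: ler_sum => x _.
rewrite normrM (ger0_norm (hpi x)) ler_wpM2l // normrM ler_wpM2l //.
exact: tp_bound.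
Qed.

End B.

Local Open Scope classical_set_scope.

Lemma lim_real (a : nat -> R) (c E : R) :
  (forall N, (0 < N)%N -> `|c - a N| <= E / N%:R) ->
  (fun N => (a N)%:E) x @[x --> \oo] --> c%:E.
Proof.
move=> hE.
apply: cvg_EFin; first by near=> N.
rewrite /comp /=.
apply/cvgrPdist_le => eps heps.
near=> N.
have hN : (0 < N)%N by near: N; exact: nbhs_infty_gt.
have hN2 : `|E| / eps <= N%:R by near: N; exact: nbhs_infty_ger.
apply: (le_trans (hE N hN)).
have hNr : 0 < (N%:R : R) by rewrite ltr0n.
rewrite ler_pdivrMr //.
apply: (le_trans (ler_norm E)).
by rewrite -ler_pdivrMl // mulrC.
Unshelve. all: by end_near.
Qed.

Lemma lim_pinfty (c : R) : 0 < c -> (fun N => (N%:R * c)%:E) x @[x --> \oo] --> +oo%E.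
Proof.
move=> hc.
apply/cvgeryP/cvgryPge => A.
near=> N.
have hN2 : A / c <= N%:R by near: N; exact: nbhs_infty_ger.
by rewrite -ler_pdivrMr.
Unshelve. all: by end_near.
Qed.

Lemma asym_closed pi T (hrev : reversible pi T) (hT : transition_matrix T)
  (hpi : forall x, 0 <= pi x) g h (hgh : forall x, g x = h x - app T h x) :
  asym_var pi T g = (ip pi h h - ip pi (app T h) (app T h))%:E.
Proof.
rewrite /asym_var; apply: (cvg_lim (@ereal_hausdorff R)).
apply: (lim_real (a := fun N => var_sum pi T g N / N%:R) (E := 4 * Bb pi h)) => N hN /=.
rewrite (var_closed hrev hT hgh).
have hNr : (N%:R : R) != 0 by rewrite pnatr_eq0 -lt0n.
set c := ip pi h h - ip pi (app T h) (app T h).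
set d := ip pi h (app T h); set e := ip pi h (tp T N.+1 h).
have -> : c - (N%:R * c - 2 * (d - e)) / N%:R = (2 * (d - e)) / N%:R.
  by field.
rewrite normrM [`|_^-1|]ger0_norm ?invr_ge0 ?ler0n // ler_wpM2r ?invr_ge0 ?ler0n //.
rewrite normrM [`|2|]ger0_norm // (_ : 4 = 2 * 2); last by rewrite -natrM.
rewrite -mulrA ler_wpM2l // mulr2n; apply: (le_trans (ler_normB _ _)).
rewrite mulrDl mul1r; apply: lerD.
  exact: (ip_bound hT h hpi 1).
exact: (ip_bound hT h hpi N.+1).
Qed.

Lemma asym_inv pi T (hrev : reversible pi T) (hT : transition_matrix T)
  f (hf : forall x, app T f x = f x) (hc : \sum_x pi x * f x = 0)
  (hpos : 0 < ip pi f f) : asym_var pi T f = +oo%E.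
Proof.
have hM1 : forall N x, M1 T f N x = N%:R * f x.
  elim=> [|N IH] x; first by rewrite M1_0 mul0r.
  rewrite M1S //; rewrite -hf; rewrite /app mulr_sumr; apply: eq_bigr => y _.
  by rewrite IH -natr1; ring.
have hV : forall N, var_sum pi T f N = (N%:R ^+ 2) * ip pi f f.
  elim=> [|N IH].
    rewrite /var_sum /expect !sum_tuple0 /= big_nil expr0n /= mulr0 expr0n subr0.
    by rewrite mul0r.
  rewrite var_rec // IH.
  have -> : ip pi f (M1 T f N) = N%:R * ip pi f f.
    by rewrite /ip mulr_sumr; apply: eq_bigr => x _; rewrite hM1; ring.
  rewrite -natr1; ring.
rewrite /asym_var; apply: (cvg_lim (@ereal_hausdorff R)).
have -> : (fun N => (var_sum pi T f N / N%:R)%:E) = (fun N => (N%:R * ip pi f f)%:E).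
  apply: funext => N; congr (_%:E); rewrite hV.
  case: N => [|N]; first by rewrite mulr0n expr2 !mul0r.
  have hN : (N.+1%:R : R) != 0 by rewrite pnatr_eq0.
  by field.
exact: lim_pinfty.
Qed.

Lemma mpow_ge0 T (hT : transition_matrix T) n x y : 0 <= mpow T n x y.
Proof.
elim: n y => [|n IH] y /=; first by case: (x == y).
apply: sumr_ge0 => z _; apply: mulr_ge0 => //; by case: hT.
Qed.

Lemma max_principle T (hT : transition_matrix T) (hirr : irreducible T) u
  (hu : forall x, app T u x = u x) x y : u x = u y.
Proof.
have [x0 _ hmax] : exists2 x0 : S, true & forall y0, u y0 <= u x0.
  exists (Order.arg_max x xpredT u) => // y0.
  by case: (arg_maxP u (isT : xpredT x)) => i _ hi; apply: hi.
have loc : forall z w, u z = u x0 -> 0 < T z w -> u w = u x0.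
  move=> z w hz hzw.
  have h0 : \sum_w' T z w' * (u x0 - u w') = 0.
    under eq_bigr do rewrite mulrBr.
    rewrite sumrB -mulr_suml; case: hT => _ ->; rewrite mul1r.
    by have := hu z; rewrite /app => ->; rewrite hz subrr.
  have hge : forall i, true -> 0 <= T z i * (u x0 - u i).
    by move=> i _; apply: mulr_ge0; [case: hT | rewrite subr_ge0].
  have : T z w * (u x0 - u w) = 0 by apply: (psumr_eq0P hge h0).
  move/eqP; rewrite mulf_eq0 (gt_eqF hzw) /= subr_eq0 => /eqP <-//.
have reach : forall n y, 0 < mpow T n x0 y -> u y = u x0.
  elim=> [|n IH] y' /=.
    by case: eqP => [->|]; rewrite ?ltxx.
  move=> hpos.
  have [z hz] : exists z, 0 < mpow T n x0 z * T z y'.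
    apply/existsP; apply: contraLR hpos; rewrite negb_exists => /forallP hall.
    rewrite -leNgt; apply: sumr_le0 => z _.
    by have := hall z; rewrite -leNgt.
  have h1 := mpow_ge0 hT n x0 z; have h2 : 0 <= T z y' by case: hT.
  move: hz; rewrite lt_neqAle mulr_ge0 // andbT eq_sym mulf_eq0 negb_or => /andP[h3 h4].
  apply: (loc z) => //; first by apply: IH; rewrite lt_neqAle eq_sym h3.
  by rewrite lt_neqAle eq_sym h4.
have [n1 h1] := hirr x0 x; have [n2 h2] := hirr x0 y.
by rewrite (reach _ _ h1) (reach _ _ h2).
Qed.

End A.

Section D.
Variables (R : realType) (S : finType).

Lemma solvable (pi : S -> R) T (hpi : pos_prob pi) (hrev : reversible pi T)
  (hT : transition_matrix T) (hirr : irreducible T) g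
  (hg : \sum_x pi x * g x = 0) : exists h, forall x, g x = h x - app T h x.
Proof.
pose V := {ffun S -> R^o}.
pose Lf (u : V) : V := [ffun x => u x - \sum_y T x y * u y].
have Llin : linear Lf.
  move=> a u v; apply/ffunP => x; rewrite !ffunE.
  under eq_bigr do rewrite !ffunE. rewrite /GRing.scale /=.
  rewrite (eq_bigr (fun i => a * (T x i * u i) + T x i * v i)); last by move=> i _; ring.
  rewrite big_split /= -mulr_sumr; ring.
pose LM := GRing.isLinear.Build _ _ _ _ Lf Llin.
pose L : {linear V -> V} := HB.pack Lf LM.
pose f := linfun L.
have fE : forall u, f u = Lf u by move=> u; rewrite lfunE.
pose one : V := [ffun _ => 1].
have [x0 _] : exists x0 : S, true.
  case: (pickP (fun _ : S => true)) => [x0 _|h0]; first by exists x0.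
  by case: hpi => _; rewrite big_pred0 // => /eqP; rewrite eq_sym oner_eq0.
have hsum : forall u, \sum_x pi x * f u x = 0.
  move=> u; rewrite fE; under eq_bigr do rewrite ffunE mulrBr.
  by rewrite sumrB (stat hrev hT (fun y => u y)) subrr.
have hone : forall c : R, \sum_x pi x * (c *: one) x = c.
  move=> c; under eq_bigr do rewrite !ffunE /GRing.scale /= mulr1.
  by rewrite -mulr_suml; case: hpi => _ ->; rewrite mul1r.
have hker : (lker f <= <[one]>)%VS.
  apply/subvP => u; rewrite memv_ker fE => /eqP hu.
  have hc : forall x, app T (fun y => u y) x = u x.
    move=> x; have := congr1 (fun w : V => w x) hu; rewrite /= !ffunE => /eqP.
    by rewrite subr_eq0 => /eqP ->.
  apply/vlineP; exists (u x0); apply/ffunP => x; rewrite !ffunE /GRing.scale /= mulr1.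
  exact: (max_principle hT hirr hc).
have hcap : (limg f :&: <[one]> = 0)%VS.
  apply/eqP; rewrite -subv0; apply/subvP => w; rewrite memv_cap.
  case/andP => /memv_imgP [u _ ->] /vlineP [c hc]; rewrite memv0.
  have c0 : c = 0 by rewrite -(hone c) -hc hsum.
  by rewrite hc c0 scale0r.
have hfull : (limg f + <[one]> = fullv)%VS.
  apply/eqP; rewrite eqEdim subvf /= dimv_disjoint_sum //.
  have := limg_ker_dim f fullv; rewrite capfv => <-.
  by rewrite addnC leq_add2l; apply: dimvS.
have : [ffun x => g x : R^o] \in (limg f + <[one]>)%VS by rewrite hfull memvf.
case/memv_addP => w /memv_imgP [u _ ->] [v /vlineP [c ->]] hgu.
have c0 : c = 0.
  rewrite -(hone c).
  have := congr1 (fun w : V => \sum_x pi x * w x) hgu; rewrite /=.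
  under eq_bigr do rewrite ffunE; rewrite hg => /esym.
  by under eq_bigr do rewrite ffunE mulrDr; rewrite big_split /= hsum add0r.
exists (fun x => u x) => x.
have := congr1 (fun w : V => w x) hgu; rewrite /= c0 scale0r addr0 !ffunE => ->.
by rewrite fE ffunE.
Qed.
Lemma sum_delta (F : S -> R) x : \sum_v F v * (v == x)%:R = F x.
Proof.
rewrite (bigD1 x) //= eqxx mulr1 big1 ?addr0 // => v /negbTE ->; by rewrite mulr0.
Qed.

Lemma entry_le1 (T : S -> S -> R) (hT : transition_matrix T) x y : T x y <= 1.
Proof.
case: hT => h0 h1; rewrite -(h1 x) (bigD1 y) //= lerDl.
by apply: sumr_ge0 => z _.
Qed.

Lemma argmax_pi (pi : S -> R) (x : S) : exists xs, forall y, pi y <= pi xs.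
Proof.
exists (Order.arg_max x xpredT pi) => y0.
by case: (arg_maxP pi (isT : xpredT x)) => i _ hi; apply: hi.
Qed.

Lemma trace_lb (pi : S -> R) (Q : S -> S -> R) (hpi : pos_prob pi) (hQ : transition_matrix Q)
  (hrev : reversible pi Q) :
  Num.max 0 ((2 * pi_max pi - 1) / pi_max pi) <= trace Q.
Proof.
case: hpi => hp hs.
have [x0 _] : exists x0 : S, true.
  case: (pickP (fun _ : S => true)) => [x0 _|h0]; first by exists x0.
  by move: hs; rewrite big_pred0 // => /eqP; rewrite eq_sym oner_eq0.
have [xs hxs] := argmax_pi pi x0.
have hm : pi_max pi = pi xs.
  apply/le_anti/andP; split.
    by apply: bigmax_le => //; apply/ltW.
  exact: le_bigmax.
have hQ0 : forall x y, 0 <= Q x y by case: hQ.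
have htr0 : 0 <= trace Q by apply: sumr_ge0.
have hdiag : Q xs xs <= trace Q.
  by rewrite /trace (bigD1 xs) //= lerDl; apply: sumr_ge0.
have key : 2 * pi xs - 1 <= pi xs * Q xs xs.
  have e1 : pi xs * Q xs xs + \sum_(y | y != xs) pi y * Q y xs = pi xs.
    rewrite -[RHS]mulr1 -(hQ.2 xs) mulr_sumr [RHS](bigD1 xs) //=; congr (_ + _).
    by apply: eq_bigr => y _; rewrite hrev.
  have e2 : \sum_(y | y != xs) pi y = 1 - pi xs.
    by rewrite -hs [X in _ = X - _](bigD1 xs) //= addrC addrK.
  have e3 : \sum_(y | y != xs) pi y * Q y xs <= \sum_(y | y != xs) pi y.
    apply: ler_sum => y _; rewrite -[X in _ <= X]mulr1 ler_wpM2l ?(ltW (hp y)) //.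
    exact: entry_le1.
  lra.
rewrite hm; have hp0 := hp xs.
rewrite ge_max htr0 /=; apply: le_trans hdiag.
by rewrite ler_pdivrMr // [Q xs xs * _]mulrC.
Qed.

Definition dk (x y : S) (a b : R) : S -> R := fun u => (u == x)%:R * a + (u == y)%:R * b.

Lemma quad (pi : S -> R) (T : S -> S -> R) x y a b :
  ip pi (dk x y a b) (app T (dk x y a b)) =
  pi x * a * (T x x * a + T x y * b) + pi y * b * (T y x * a + T y y * b).
Proof.
have happ : forall u, app T (dk x y a b) u = T u x * a + T u y * b.
  move=> u; rewrite /app /dk.
  rewrite (eq_bigr (fun v => (T u v * a) * (v == x)%:R + (T u v * b) * (v == y)%:R)).
    by rewrite big_split /= !sum_delta.
  by move=> v _; ring.
rewrite /ip; under eq_bigr do rewrite happ.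
rewrite (eq_bigr (fun u => (pi u * a * (T u x * a + T u y * b)) * (u == x)%:R
   + (pi u * b * (T u x * a + T u y * b)) * (u == y)%:R)).
  by rewrite big_split /= !sum_delta.
by move=> u _; rewrite /dk; ring.
Qed.

Lemma choose_k (pi : S -> R) (P Q : S -> S -> R) (hpi : pos_prob pi)
  (hP : transition_matrix P) (hQ : transition_matrix Q)
  (hrevP : reversible pi P) (hrevQ : reversible pi Q)
  (htr : trace P <= trace Q) (hne : Q <> P) :
  exists k, ip pi k (app P k) < ip pi k (app Q k).
Proof.
case: hpi => hp hs.
case: (boolP [exists x, P x x < Q x x]) => [/existsP [x hx]|].
  exists (dk x x 1 0); rewrite !quad.
  have := hp x; nra.
rewrite negb_exists => /forallP hall.
have hdiag : forall x, Q x x = P x x.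
  have hle : forall x, Q x x <= P x x by move=> x; have := hall x; rewrite -leNgt.
  have h0 : \sum_x (P x x - Q x x) = 0.
    apply/eqP; rewrite eq_le; apply/andP; split.
      by move: htr; rewrite /trace sumrB subr_le0.
    by apply: sumr_ge0 => x _; rewrite subr_ge0.
  move=> x; apply/eqP; rewrite eq_sym -subr_eq0; apply/eqP.
  by apply: (psumr_eq0P _ h0) => // i _; rewrite subr_ge0.
have [x [y hxy]] : exists x y, Q x y != P x y.
  case: (pselect (exists x y, Q x y != P x y)) => // hno; exfalso; apply: hne.
  apply: funext => x; apply: funext => y; apply/eqP; apply/negPn/negP => h.
  by apply: hno; exists x, y.
set b := Q x y - P x y.
have hb : b != 0 by rewrite subr_eq0.
exists (dk x y 1 b); rewrite !quad !hdiag.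
have e : pi y * Q y x - pi y * P y x = pi x * b by rewrite -hrevP -hrevQ /b; ring.
have hb2 : 0 < b * b by rewrite -expr2 exprn_even_gt0.
have hpb : 0 < pi x * (b * b) by rewrite mulr_gt0.
have e' : pi y * b * Q y x - pi y * b * P y x = pi x * (b * b).
  by transitivity ((pi y * Q y x - pi y * P y x) * b); [ring | rewrite e; ring].
have hQxy : Q x y = P x y + b by rewrite /b; ring.
rewrite hQxy.
suff : pi x * 1 * (P x x * 1 + P x y * b) + pi y * b * (P y x * 1 + P y y * b) +
  2 * (pi x * (b * b)) = pi x * 1 * (P x x * 1 + (P x y + b) * b) + pi y * b * (Q y x * 1 + P y y * b).
  move=> <-; lra.
apply/eqP; rewrite -subr_eq0; apply/eqP.
transitivity (pi x * (b * b) - (pi y * b * Q y x - pi y * b * P y x)); first ring.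
by rewrite e' subrr.
Qed.

Lemma closed_class (pi : S -> R) (Q : S -> S -> R) (hpi : pos_prob pi)
  (hQ : transition_matrix Q) (hrev : reversible pi Q) (hnirr : ~ irreducible Q) :
  exists f : S -> R, (forall x, app Q f x = f x) /\ \sum_x pi x * f x = 0 /\ 0 < ip pi f f.
Proof.
case: hpi => hp hs; have hQ0 : forall a b, 0 <= Q a b by case: hQ.
have [x [y hxy]] : exists x y, forall n, ~ (0 < mpow Q n x y).
  case: (pselect (exists x y, forall n, ~ (0 < mpow Q n x y))) => // hno.
  exfalso; apply: hnirr => x y.
  case: (pselect (exists n, 0 < mpow Q n x y)) => // hn.
  by exfalso; apply: hno; exists x, y => n hn'; apply: hn; exists n.
pose reach z := `[< exists n, 0 < mpow Q n x z >].
pose c z : R := (reach z)%:R.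
have hstep : forall z w, reach z -> 0 < Q z w -> reach w.
  move=> z w /asboolP [n hn] hzw; apply/asboolP; exists n.+1 => /=.
  rewrite (bigD1 z) //=.
  have h1 := mulr_gt0 hn hzw.
  have h2 : 0 <= \sum_(i | i != z) mpow Q n x i * Q i w.
    by apply: sumr_ge0 => i _; apply: mulr_ge0 => //; apply: mpow_ge0.
  lra.
have hQz : forall z w, ~~ reach w -> reach z -> Q z w = 0.
  move=> z w hw hz; apply/eqP; rewrite eq_le hQ0 andbT leNgt; apply/negP => hzw.
  by move: hw; rewrite (hstep z w hz hzw).
have hcQ : forall z, app Q c z = c z.
  move=> z; rewrite /app /c; case: (boolP (reach z)) => hz.
    transitivity (\sum_w Q z w); last by case: hQ => _ ->.
    apply: eq_bigr => w _; case: (boolP (reach w)) => hw; first by rewrite mulr1.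
    by rewrite (hQz z w hw hz) mul0r.
  apply: big1 => w _; case: (boolP (reach w)) => hw; last by rewrite mulr0.
  suff -> : Q z w = 0 by rewrite mul0r.
  have := hQz w z hz hw => hwz.
  have := hrev z w; rewrite hwz mulr0 => /eqP; rewrite mulf_eq0 => /orP [|/eqP //].
  by rewrite (gt_eqF (hp z)).
pose p := \sum_z pi z * c z.
exists (fun z => c z - p); split; [|split].
- move=> z; rewrite appB hcQ; congr (_ - _).
  by rewrite /app -mulr_suml; case: hQ => _ ->; rewrite mul1r.
- under eq_bigr do rewrite mulrBr; by rewrite sumrB -mulr_suml hs mul1r subrr.
have hx : reach x by apply/asboolP; exists 0%N => /=; rewrite eqxx ltr01.
have hy : ~~ reach y by apply/asboolP => -[n hn]; exact: (hxy n).
have hp1 : p < 1.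
  have : 0 < \sum_z pi z * (1 - c z).
    rewrite (bigD1 y) //= /c (negbTE hy) subr0 mulr1.
    have : 0 <= \sum_(i | i != y) pi i * (1 - (reach i)%:R).
      apply: sumr_ge0 => i _; apply: mulr_ge0; first exact: ltW.
      by case: (reach i); rewrite ?subrr ?subr0.
    have := hp y; lra.
  under eq_bigr do rewrite mulrBr mulr1; rewrite sumrB hs.
  by rewrite subr_gt0.
rewrite /ip (bigD1 x) //= /c hx.
have : 0 <= \sum_(i | i != x) pi i * (((reach i)%:R - p) * ((reach i)%:R - p)).
  apply: sumr_ge0 => i _; apply: mulr_ge0; first exact: ltW.
  by rewrite -expr2 sqr_ge0.
have : 0 < pi x * ((1 - p) * (1 - p)).
  have h1p : 0 < 1 - p by rewrite subr_gt0.
  by apply: mulr_gt0 => //; apply: mulr_gt0.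
rewrite /= ; lra.
Qed.

Lemma dirichlet (pi : S -> R) (Q : S -> S -> R) (hrev : reversible pi Q)
  (hQ : transition_matrix Q) (hpi0 : forall x, 0 <= pi x) u :
  ip pi u (app Q u) <= ip pi u u.
Proof.
have hQ0 : forall a b, 0 <= Q a b by case: hQ.
have e1 : ip pi u (app Q u) = \sum_x \sum_y pi x * Q x y * (u x * u y).
  rewrite /ip; apply: eq_bigr => x _; rewrite /app mulr_sumr mulr_sumr.
  by apply: eq_bigr => y _; ring.
have e2 : \sum_x \sum_y pi x * Q x y * (u x ^+ 2 + u y ^+ 2) = 2 * ip pi u u.
  transitivity (\sum_x (pi x * (u x * u x)) * \sum_y Q x y +
                \sum_x pi x * app Q (fun y => u y * u y) x).
    rewrite -big_split /=; apply: eq_bigr => x _.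
    rewrite /app mulr_sumr mulr_sumr -big_split /=; apply: eq_bigr => y _; ring.
  rewrite stat //.
  under eq_bigr do rewrite (hQ.2) mulr1.
  by rewrite /ip; ring.
have ineq : 2 * (\sum_x \sum_y pi x * Q x y * (u x * u y)) <=
    \sum_x \sum_y pi x * Q x y * (u x ^+ 2 + u y ^+ 2).
  rewrite mulr_sumr; apply: ler_sum => x _; rewrite mulr_sumr; apply: ler_sum => y _.
  have hpq : 0 <= pi x * Q x y by apply: mulr_ge0.
  have hsq : 0 <= (u x - u y) ^+ 2 by apply: sqr_ge0.
  have : 2 * (u x * u y) <= u x ^+ 2 + u y ^+ 2.
    by move: hsq; rewrite sqrrB; lra.
  move=> h; have := ler_wpM2l hpq h; lra.
rewrite e1; move: ineq; rewrite e2; lra.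
Qed.

Theorem theorem8_gen (pi : S -> R) (P : S -> S -> R)
  (hpi : pos_prob pi) (hP : transition_matrix P) (hirr : irreducible P)
  (hrev : reversible pi P)
  (htr : trace P = Num.max 0 ((2 * pi_max pi - 1) / pi_max pi)) :
  forall Q : S -> S -> R, transition_matrix Q -> reversible pi Q -> Q <> P ->
    ~ eff_dominates pi Q P.
Proof.
move=> Q hQ hrevQ hne hdom.
have hpi0 : forall x, 0 <= pi x by move=> x; apply: ltW; case: hpi => h _; exact: h x.
have htrle : trace P <= trace Q by rewrite htr; apply: trace_lb.
case: (pselect (irreducible Q)) => hirrQ.
- have [k hk] := choose_k hpi hP hQ hrev hrevQ htrle hne.
  pose f := fun x => k x - app P k x.
  have hfk : forall x, f x = k x - app P k x by [].
  have hfc : \sum_x pi x * f x = 0 := g_centered hrev hP hfk.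
  have [h hh] := solvable hpi hrevQ hQ hirrQ hfc.
  have := hdom f.
  rewrite (asym_closed hrevQ hQ hpi0 hh) (asym_closed hrev hP hpi0 hfk) lee_fin.
  apply/negP; rewrite -ltNge.
  have i1 : ip pi h h - ip pi (app Q h) (app Q h) = 2 * ip pi f h - ip pi f f.
    rewrite /ip -sumrB mulr_sumr -sumrB; apply: eq_bigr => x _; rewrite hh; ring.
  have i2 : ip pi k k - ip pi (app P k) (app P k) = 2 * ip pi f k - ip pi f f.
    rewrite /ip -sumrB mulr_sumr -sumrB; apply: eq_bigr => x _; rewrite hfk; ring.
  have hD := dirichlet hrevQ hQ hpi0 (fun x => h x - k x).
  have eD : ip pi (fun x => h x - k x) (app Q (fun x => h x - k x)) =
     ip pi h (app Q h) - ip pi h (app Q k) - ip pi k (app Q h) + ip pi k (app Q k).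
    rewrite /ip -!sumrB -big_split /=; apply: eq_bigr => x _; rewrite appB; ring.
  have eD2 : ip pi (fun x => h x - k x) (fun x => h x - k x) =
     ip pi h h - 2 * ip pi h k + ip pi k k.
    rewrite /ip mulr_sumr -!sumrB -big_split /=; apply: eq_bigr => x _; ring.
  have sy : ip pi k (app Q h) = ip pi h (app Q k) by rewrite ip_sym ip_app.
  have f1 : ip pi f k = ip pi h k - ip pi h (app Q k).
    rewrite -ip_app // /ip -sumrB; apply: eq_bigr => x _; rewrite hh; ring.
  have f2 : ip pi f k = ip pi k k - ip pi k (app P k).
    rewrite /ip -sumrB; apply: eq_bigr => x _; rewrite hfk; ring.
  have f3 : ip pi f h = ip pi h h - ip pi h (app Q h).
    rewrite /ip -sumrB; apply: eq_bigr => x _; rewrite hh; ring.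
  rewrite i1 i2; move: hD; rewrite eD eD2 sy; lra.
- have [f [hfQ [hfc hfpos]]] := closed_class hpi hQ hrevQ hirrQ.
  have [k hk] := solvable hpi hrev hP hirr hfc.
  have := hdom f.
  by rewrite (asym_inv hrevQ hQ hfQ hfc hfpos) (asym_closed hrev hP hpi0 hk) leNgt ltry.
Qed.

End D.

Theorem theorem8 (R : realType) (S : finType) (pi : S -> R) (P : S -> S -> R)
  (hpi : pos_prob pi) (hP : transition_matrix P) (hirr : irreducible P)
  (hrev : reversible pi P)
  (htr : trace P = Num.max 0 ((2 * pi_max pi - 1) / pi_max pi)) :
  forall Q : S -> S -> R, transition_matrix Q -> reversible pi Q -> Q <> P ->
    ~ eff_dominates pi Q P.
Proof. exact: (theorem8_gen hpi hP hirr hrev htr). Qed.
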